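(* Let $\pi=(O,h)$ be the complete prefix unfolding of a bounded net system and let $e_1,e_2$ be events of $\pi$. If $e_1\triangleright e_2$, then $e_1<_{ear}e_2$.
   Context: Occurrence net $O=(C,E,G)$ (conditions $C$, events $E$); $x<y$ iff there is a directed path with at least one arc from $x$ to $y$. For a set of nodes $Y$, $\bullet Y=\bigcup_{y\in Y}\bullet y$; thus $\bullet(\bullet e)$ is the set of events having an output condition in the preset of $e$. For a set of events $E_0$, $Max(E_0)=\{e\in E_0\mid\forall e'\in E_0:e\not<e'\}$. Max-Event Adjacency: for events $e_1<e_2$, $e_1\triangleright e_2$ iff $e_1\in Max(\bullet(\bullet e_2))$. A bounded net system is one whose reachable markings are uniformly bounded; $\pi=(O,h)$ is its complete prefix unfolding in the sense of McMillan/Esparza ($h$ maps conditions to places and events to transitions; the prefix is the greatest backward closed subnet of the unfolding containing no events after a cut-off event). The prefix is viewed as a net whose initial marking marks exactly the minimal conditions; its reachable markings are the sets $Cut(\mathcal C)=(Min(O)\cup\mathcal C\bullet)\setminus\bullet\mathcal C$ for configurations $\mathcal C$ (conflict-free backward closed sets of events). Event adjacency relation: $e_1<_{ear}e_2$ iff there exist reachable markings $M_1,M_1',M_2,M_2'$ of $\pi$ with $M_1\xrightarrow{e_1}M_1'$, $M_2\xrightarrow{e_2}M_2'$ and $h(M_2)=h(M_1')$. *)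

(* Defs.v *)
(* the occurrence net
   (unfolding) lives in arbitrary, possibly infinite, Types. *)
From Stdlib Require List.
From Stdlib Require Import Relations.Relation_Operators.
From HB Require Import structures.
From mathcomp Require Import all_boot.

Set Implicit Arguments.
Unset Strict Implicit.
Unset Printing Implicit Defensive.

Definition has_card (T : Type) (A : T -> Prop) (n : nat) : Prop :=
  exists l : list T, List.NoDup l /\ (forall x, List.In x l <-> A x)
                     /\ List.length l = n.

Record netsys := NetSys {
  place : finType;
  trans : finType;
  npre  : place -> trans -> bool;
  npost : trans -> place -> bool;
  m0    : place -> nat
}.

Definition nmarking (N : netsys) := place N -> nat.

Definition nenabled (N : netsys) (M : nmarking N) (t : trans N) : Prop :=
  forall p, npre p t -> 0 < M p.

Definition nfire (N : netsys) (M : nmarking N) (t : trans N) : nmarking N :=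
  fun p => M p - npre p t + npost t p.

Inductive nreachable (N : netsys) : nmarking N -> Prop :=
| nreach0 : nreachable (@m0 N)
| nreachS (M : nmarking N) (t : trans N) :
    nreachable M -> nenabled M t -> nreachable (nfire M t).

Definition bounded (N : netsys) : Prop :=
  exists k, forall M : nmarking N, nreachable M -> forall p, M p <= k.

Record pnet := PNet {
  cnd   : Type;
  evt   : Type;
  ipre  : evt -> cnd -> Prop;   (* c \in pre-set of e  (arc c -> e) *)
  ipost : evt -> cnd -> Prop    (* c \in post-set of e (arc e -> c) *)
}.

Definition node (O : pnet) := (cnd O + evt O)%type.

Inductive flow (O : pnet) : node O -> node O -> Prop :=
| flow_ce (c : cnd O) (e : evt O) : ipre e c -> flow (inl c) (inr e)
| flow_ec (e : evt O) (c : cnd O) : ipost e c -> flow (inr e) (inl c).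

Definition nlt (O : pnet) : node O -> node O -> Prop :=
  clos_trans (node O) (@flow O).

Definition nle (O : pnet) (x y : node O) : Prop := x = y \/ nlt x y.

Definition conflict (O : pnet) (x y : node O) : Prop :=
  exists (e1 e2 : evt O) (c : cnd O),
    e1 <> e2 /\ ipre e1 c /\ ipre e2 c /\ nle (inr e1) x /\ nle (inr e2) y.

Definition concurrent (O : pnet) (x y : node O) : Prop :=
  ~ nlt x y /\ ~ nlt y x /\ ~ conflict x y.

Definition occurrence_net (O : pnet) : Prop :=
  (forall (c : cnd O) (e1 e2 : evt O), ipost e1 c -> ipost e2 c -> e1 = e2) /\
  (forall x : node O, ~ nlt x x) /\
  (forall x : node O, exists l : list (node O), forall y, nlt y x -> List.In y l) /\
  (forall x : node O, ~ conflict x x).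

Definition minc (O : pnet) (c : cnd O) : Prop := forall e : evt O, ~ ipost e c.

Definition is_branching_process (N : netsys) (O : pnet)
    (hc : cnd O -> place N) (he : evt O -> trans N) : Prop :=
  occurrence_net O /\
  (* h restricted to Min(O) is a bijection onto the initial marking *)
  (forall p, has_card (fun c => minc c /\ hc c = p) (@m0 N p)) /\
  (* h restricted to the pre-set / post-set of e is a bijection onto that of h(e) *)
  (forall e p, npre p (he e) <-> exists c, ipre e c /\ hc c = p) /\
  (forall e c1 c2, ipre e c1 -> ipre e c2 -> hc c1 = hc c2 -> c1 = c2) /\
  (forall e p, npost (he e) p <-> exists c, ipost e c /\ hc c = p) /\
  (forall e c1 c2, ipost e c1 -> ipost e c2 -> hc c1 = hc c2 -> c1 = c2) /\
  (forall e1 e2, (forall c, ipre e1 c <-> ipre e2 c) -> he e1 = he e2 -> e1 = e2).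

(* The unfolding: the (up to isomorphism unique) branching process in which
   every possible extension is already present. *)
Definition is_unfolding (N : netsys) (O : pnet)
    (hc : cnd O -> place N) (he : evt O -> trans N) : Prop :=
  is_branching_process hc he /\
  forall (t : trans N) (X : cnd O -> Prop),
    (forall c1 c2, X c1 -> X c2 -> c1 <> c2 -> concurrent (inl c1) (inl c2)) ->
    (forall p, npre p t <-> exists c, X c /\ hc c = p) ->
    (forall c1 c2, X c1 -> X c2 -> hc c1 = hc c2 -> c1 = c2) ->
    exists e, he e = t /\ forall c, ipre e c <-> X c.

Definition configuration (O : pnet) (C : evt O -> Prop) : Prop :=
  (forall e e', C e -> nlt (inr e') (inr e) -> C e') /\
  (forall e e', C e -> C e' -> ~ conflict (inr e) (inr e')).

Definition cut (O : pnet) (C : evt O -> Prop) : cnd O -> Prop :=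
  fun c => (minc c \/ exists e, C e /\ ipost e c) /\ ~ (exists e, C e /\ ipre e c).

Definition loc (O : pnet) (e : evt O) : evt O -> Prop :=
  fun e' => nle (inr e') (inr e).

(* h(M) = h(M') as multisets of places *)
Definition same_mark (N : netsys) (O : pnet) (hc : cnd O -> place N)
    (M M' : cnd O -> Prop) : Prop :=
  forall p n, has_card (fun c => M c /\ hc c = p) n <->
              has_card (fun c => M' c /\ hc c = p) n.

(* McMillan cut-off events (size-based adequate order) *)
Definition cutoff (N : netsys) (O : pnet) (hc : cnd O -> place N) (e : evt O) : Prop :=
  exists e' : evt O,
    same_mark hc (cut (loc e')) (cut (loc e)) /\
    exists n' n, has_card (loc e') n' /\ has_card (loc e) n /\ n' < n.

(* ---------- The complete prefix: greatest backward closed subnet of the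
   unfolding containing no event after a cut-off event ---------- *)
Definition in_prefix_ev (N : netsys) (O : pnet) (hc : cnd O -> place N)
    (e : evt O) : Prop :=
  forall e', cutoff hc e' -> ~ nlt (inr e') (inr e).

Definition in_prefix_cnd (N : netsys) (O : pnet) (hc : cnd O -> place N)
    (c : cnd O) : Prop :=
  forall e', nlt (inr e') (inl c) -> in_prefix_ev hc e'.

Definition prefix_configuration (N : netsys) (O : pnet) (hc : cnd O -> place N)
    (C : evt O -> Prop) : Prop :=
  configuration C /\ forall e, C e -> in_prefix_ev hc e.

Definition pf_reachable (N : netsys) (O : pnet) (hc : cnd O -> place N)
    (M : cnd O -> Prop) : Prop :=
  exists C, prefix_configuration hc C /\ forall c, M c <-> cut C c.

Definition pf_fire (N : netsys) (O : pnet) (hc : cnd O -> place N)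
    (M : cnd O -> Prop) (e : evt O) (M' : cnd O -> Prop) : Prop :=
  in_prefix_ev hc e /\
  (forall c, ipre e c -> M c) /\
  (forall c, M' c <-> (M c /\ ~ ipre e c) \/ ipost e c).

Definition ear (N : netsys) (O : pnet) (hc : cnd O -> place N) (e1 e2 : evt O) : Prop :=
  exists M1 M1' M2 M2' : cnd O -> Prop,
    pf_reachable hc M1 /\ pf_reachable hc M1' /\
    pf_reachable hc M2 /\ pf_reachable hc M2' /\
    pf_fire hc M1 e1 M1' /\ pf_fire hc M2 e2 M2' /\
    same_mark hc M2 M1'.

Definition pre_pre (O : pnet) (e e' : evt O) : Prop :=
  exists c, ipre e c /\ ipost e' c.

Definition max_adj (O : pnet) (e1 e2 : evt O) : Prop :=
  nlt (inr e1) (inr e2) /\ pre_pre e2 e1 /\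
  forall e', pre_pre e2 e' -> ~ nlt (inr e1) (inr e').

(* Main.v *)
Require Import Defs.
From mathcomp Require Import all_boot.
From Stdlib Require Import Relations.Relation_Operators Relations.Operators_Properties Classical.

Lemma nlt_trans (O : pnet) (x y z : node O) : nlt x y -> nlt y z -> nlt x z.
Proof. intros; eapply t_trans; eauto. Qed.

Lemma nle_trans (O : pnet) (x y z : node O) : nle x y -> nle y z -> nle x z.
Proof.
  intros [->|H1] [->|H2]; [left|right|right|right]; auto. eapply nlt_trans; eauto.
Qed.

Lemma key (O : pnet) (e e2 : evt O) : nlt (inr e) (inr e2) ->
  exists e', pre_pre e2 e' /\ nle (inr e) (inr e').
Proof.
  intro H. apply clos_trans_tn1_iff in H.
  inversion H as [? Hf|y ? Hf Ht]; subst.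
  - inversion Hf.
  - inversion Hf as [c ? Hc|]; subst.
    inversion Ht as [? Hf2|y' ? Hf2 Ht2]; subst.
    + inversion Hf2 as [|? ? Hp]; subst. exists e; split; [exists c; auto|left; auto].
    + inversion Hf2 as [|e' ? Hp]; subst. exists e'; split; [exists c; auto|].
      right. apply clos_trans_tn1_iff. exact Ht2.
Qed.

Lemma fire_lemma (O : pnet) (C C' : evt O -> Prop) (f : evt O) :
  (forall e, C' e <-> C e \/ e = f) ->
  (forall c e, ipost f c -> ipre e c -> ~ C' e) ->
  (forall c, ipre f c -> forall e, C e -> ~ ipre e c) ->
  (forall c, ipre f c -> minc c \/ exists e, C e /\ ipost e c) ->
  (forall c, ipre f c -> cut C c) /\
  (forall c, cut C' c <-> (cut C c /\ ~ ipre f c) \/ ipost f c).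
Proof.
  intros HC' Hpost Hcons Hprod. split.
  - intros c Hc. split; [auto|]. intros [e [He Hpe]]. exact (Hcons c Hc e He Hpe).
  - intro c. split.
    + intros [Hp Hn]. destruct (classic (ipost f c)) as [Hf|Hf]; [right; auto|left].
      split; [split|].
      * destruct Hp as [Hm|[e [He Hpe]]]; [left; auto|right].
        destruct (proj1 (HC' e) He) as [He2| ->]; [eauto|contradiction].
      * intros [e [He Hpe]]. apply Hn. exists e; split; auto. apply HC'; auto.
      * intro Hpf. apply Hn. exists f; split; auto. apply HC'; auto.
    + intros [[[Hp Hn] Hnf]|Hf]; split.
      * destruct Hp as [Hm|[e [He Hpe]]]; [left; auto|right].
        exists e; split; auto. apply HC'; auto.
      * intros [e [He Hpe]]. destruct (proj1 (HC' e) He) as [He2| ->].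
        -- apply Hn; eauto.
        -- auto.
      * right. exists f; split; auto. apply HC'; auto.
      * intros [e [He Hpe]]. exact (Hpost c e Hf Hpe He).
Qed.

Theorem proposition5 (N : netsys) (O : pnet)
    (hc : cnd O -> place N) (he : evt O -> trans N) :
  bounded N -> is_unfolding hc he ->
  forall e1 e2 : evt O,
    in_prefix_ev hc e1 -> in_prefix_ev hc e2 ->
    max_adj e1 e2 -> ear hc e1 e2.
Proof.
  intros _ [[[_ [Hacy [_ Hnc]]] _] _] e1 e2 Hp1 Hp2 [H12 [_ Hmax]].
  set C3 := fun e => nle (inr e) (inr e2).
  set C2 := fun e => nlt (inr e) (inr e2).
  set C1 := fun e => nlt (inr e) (inr e2) /\ e <> e1.
  assert (Hm : forall e, nlt (inr e1) (inr e) -> ~ nlt (inr e) (inr e2)).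
  { intros e H1 H2. destruct (@key O e e2 H2) as [e' [Hpp Hle]].
    apply (Hmax e' Hpp). destruct Hle as [Heq|Hlt]; [rewrite <- Heq; auto|].
    eapply nlt_trans; eauto. }
  assert (Hcf : forall e e', C3 e -> C3 e' -> ~ conflict (inr e) (inr e')).
  { intros e e' H H' [a [b [c [Hab [Ha [Hb [Hle1 Hle2]]]]]]].
    apply (Hnc (inr e2)). exists a, b, c; repeat split; auto; eapply nle_trans; eauto. }
  assert (Hpf : forall e, C3 e -> in_prefix_ev hc e).
  { intros e He e' Hco Hlt. apply (Hp2 e' Hco).
    destruct He as [He|He]; [rewrite <- He; auto|]. eapply nlt_trans; eauto. }
  assert (P3 : prefix_configuration hc C3).
  { split; [split|]; auto.
    intros e e' He Hlt. right. destruct He as [He|He]; [rewrite <- He; auto|].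
    eapply nlt_trans; eauto. }
  assert (P2 : prefix_configuration hc C2).
  { split; [split|].
    - intros e e' He Hlt. eapply nlt_trans; eauto.
    - intros e e' He He'; apply Hcf; right; auto.
    - intros e He; apply Hpf; right; auto. }
  assert (P1 : prefix_configuration hc C1).
  { split; [split|].
    - intros e e' [He Hne] Hlt. split; [eapply nlt_trans; eauto|].
      intros ->. exact (Hm e Hlt He).
    - intros e e' [He _] [He' _]; apply Hcf; right; auto.
    - intros e [He _]; apply Hpf; right; auto. }
  assert (R : forall C, prefix_configuration hc C -> pf_reachable hc (cut C)).
  { intros C HC; exists C; split; auto; tauto. }
  destruct (@fire_lemma O C1 C2 e1) as [F1a F1b].
  { intro e; unfold C1, C2; split.
    - intro H. destruct (classic (e = e1)); [right|left]; auto.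
    - intros [[H _]| ->]; auto. }
  { intros c e Hpo Hpr He. apply (Hm e); auto.
    eapply t_trans; apply t_step; [apply flow_ec; eauto|apply flow_ce; eauto]. }
  { intros c Hc e [He Hne] Hpe. apply (Hcf e e1); [right; auto|right; auto|].
    exists e, e1, c; repeat split; auto; left; auto. }
  { intros c Hc. destruct (classic (minc c)) as [|Hnm]; [left; auto|right].
    apply not_all_not_ex in Hnm as [e He]. exists e; split; [split|auto].
    - eapply nlt_trans; [|exact H12].
      eapply t_trans; apply t_step; [apply flow_ec; eauto|apply flow_ce; eauto].
    - intros ->. apply (Hacy (inr e1)).
      eapply t_trans; apply t_step; [apply flow_ec; eauto|apply flow_ce; eauto]. }
  destruct (@fire_lemma O C2 C3 e2) as [F2a F2b].
  { intro e; unfold C2, C3, nle; split.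
    - intros [H|H]; [right; injection H; auto|left; auto].
    - intros [H| ->]; [right|left]; auto. }
  { intros c e Hpo Hpr He. apply (Hacy (inr e2)).
    assert (nlt (inr e2) (inr e)) by
      (eapply t_trans; apply t_step; [apply flow_ec; eauto|apply flow_ce; eauto]).
    destruct He as [He|He]; [rewrite He in H; auto|eapply nlt_trans; eauto]. }
  { intros c Hc e He Hpe. apply (Hcf e2 e2); [left; auto|left; auto|].
    exists e, e2, c; repeat split; auto.
    - intros ->. exact (Hacy _ He).
    - right; auto.
    - left; auto. }
  { intros c Hc. destruct (classic (minc c)) as [|Hnm]; [left; auto|right].
    apply not_all_not_ex in Hnm as [e He]. exists e; split; auto.
    eapply t_trans; apply t_step; [apply flow_ec; eauto|apply flow_ce; eauto]. }
  exists (cut C1), (cut C2), (cut C2), (cut C3).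
  split; [apply R; auto|]. split; [apply R; auto|].
  split; [apply R; auto|]. split; [apply R; auto|].
  split; [split; [exact Hp1|split; [exact F1a|exact F1b]]|].
  split; [split; [exact Hp2|split; [exact F2a|exact F2b]]|].
  intros p n; tauto.
Qed.
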